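(* Let $G=(U\cup W,E)$ be a finite bipartite graph with bipartition $(U,W)$. For every $\mathbf{I}\in\{0,1\}^{\vec E}$ with $\mathbf{I}=\mathcal{P}_G(\mathcal{P}_G(\mathbf{I}))$, the set $V(\mathbf{I})$ is a vertex cover of $G$.
   Context: $\vec E$: directed edges; $\partial v$: neighbours of $v$; empty sums are $0$. $\mathcal{P}_G:\{0,1\}^{\vec E}\to\{0,1\}^{\vec E}$, $\mathcal{P}_G(\mathbf{I})_{u\to v}=\mathbf{1}(\sum_{w\in\partial u\setminus v}I_{w\to u}=0)$. $V(\mathbf{I})$: for $u\in U$, $u\in V(\mathbf{I})$ iff $\sum_{v\in\partial u}I_{v\to u}\ge1$; for $w\in W$, $w\in V(\mathbf{I})$ iff $\sum_{v\in\partial w}\mathcal{P}_G(\mathbf{I})_{v\to w}\ge2$. *)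

(* Defs.v *)
From mathcomp Require Import all_boot.
Set Implicit Arguments. Unset Strict Implicit. Unset Printing Implicit Defensive.

Section BP.
Variables (T : finType) (e : rel T).

Definition dedge := {x : T * T | e x.1 x.2}.

Definition config := dedge -> bool.

(* I_{w->u}, read as a 0/1 value; 0 if (w,u) is not an edge (never used) *)
Definition ival (I : config) (w u : T) : nat :=
  match insub (w, u) with Some d => nat_of_bool (I d) | None => 0 end.

Definition PG (I : config) : config :=
  fun d => \sum_(w | e (val d).1 w && (w != (val d).2)) ival I w (val d).1 == 0.

Definition VI (U : {set T}) (I : config) : {set T} :=
  [set x | if x \in U then 1 <= \sum_(v | e x v) ival I v x
           else 2 <= \sum_(v | e x v) ival (PG I) v x].

Definition vertex_cover (C : {set T}) :=
  forall x y, e x y -> (x \in C) || (y \in C).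

Definition simple_graph := symmetric e /\ irreflexive e.
Definition bipartition (U : {set T}) :=
  forall x y, e x y -> (x \in U) != (y \in U).
End BP.

(* Main.v *)
Require Import Defs.
From mathcomp Require Import all_boot.

Lemma ivalE (T : finType) (e : rel T) (I : config e) v x (h : e v x) :
  ival I v x = I (exist _ (v, x) h).
Proof. by rewrite /ival (@insubT _ (fun p : T * T => e p.1 p.2) _ (v, x) h). Qed.

Lemma sum_nat_eq0P (I : finType) (P : pred I) (E : I -> nat) :
  reflect (forall i, P i -> E i = 0) (\sum_(i | P i) E i == 0).
Proof.
rewrite sum_nat_eq0; apply: (iffP forallP) => H i.
  by move=> Pi; move: (H i); rewrite Pi => /eqP.
by apply/implyP => /H ->.
Qed.

Lemma cover_case (T : finType) (e : rel T) (U : {set T}) :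
  simple_graph e -> bipartition e U ->
  forall I : config e, (forall d, I d = PG (PG I) d) ->
  forall x y, e x y -> x \in U -> y \notin U ->
  (x \in VI U I) || (y \in VI U I).
Proof.
move=> [sym irr] bip I fixI x y exy xU yU.
have eyx : e y x by rewrite sym.
rewrite !inE xU (negbTE yU).
rewrite lt0n; case: eqP => [/eqP/sum_nat_eq0P H0|] //=.
have Iyx : ival I y x = 0 by apply: H0.
have Hs : \sum_(w | e y w && (w != x)) ival (PG I) w y != 0.
  move: Iyx; rewrite (@ivalE _ _ I _ _ eyx) fixI [PG (PG I) _]/PG /=.
  by case: eqP.
have [w /andP [/andP [eyw wx] ww]] :
  exists w, (e y w && (w != x)) && (ival (PG I) w y != 0).
  apply/existsP; apply: contraR Hs => /existsPn Hn.
  apply/sum_nat_eq0P => i Pi; move: (Hn i); rewrite Pi /= => /negbNE/eqP.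
  by [].
have Pxy : ival (PG I) x y = 1.
  rewrite (@ivalE _ _ (PG I) _ _ exy) [PG I _]/PG /=.
  suff -> : \sum_(w0 | e x w0 && (w0 != y)) ival I w0 x = 0 by [].
  by apply/eqP; apply/sum_nat_eq0P => i /andP [exi _]; apply: H0.
rewrite (bigD1 x) //= Pxy (bigD1 w) /=; last by rewrite eyw wx.
by rewrite add1n ltnS; apply: leq_trans (leq_addr _ _); rewrite lt0n.
Qed.

Theorem mainTheorem16 (T : finType) (e : rel T) (U : {set T}) :
  simple_graph e -> bipartition e U ->
  forall I : config e, (forall d, I d = PG (PG I) d) ->
  vertex_cover e (VI U I).
Proof.
move=> sg bip I fixI x y exy.
have := bip x y exy.
case xU: (x \in U); case yU: (y \in U) => //= _.
  exact: (@cover_case _ _ _ sg bip _ fixI _ _ exy xU (negbT yU)).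
have eyx : e y x by case: sg => sym _; rewrite sym.
rewrite orbC; exact: (@cover_case _ _ _ sg bip _ fixI _ _ eyx yU (negbT xU)).
Qed.
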